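(* A quasi-order is unary FA-presentable if and only if it is isomorphic to one obtained by propagating a unary FA-foundational quasi-order $(Q,\le)$ in which every seed $P_k=\{p^{(k)}_1,\dots,p^{(k)}_5\}$ is either an anti-chain (no two distinct $p^{(k)}_i$ are comparable), an ascending chain ($p^{(k)}_1<p^{(k)}_2<p^{(k)}_3<p^{(k)}_4<p^{(k)}_5$), a descending chain ($p^{(k)}_1>p^{(k)}_2>p^{(k)}_3>p^{(k)}_4>p^{(k)}_5$), or a strongly connected component ($p^{(k)}_i\le p^{(k)}_j$ for all $i,j\in\{1,\dots,5\}$).
   Context: A quasi-order is a reflexive transitive binary relation; $x<y$ means $x\le y$ and not $y\le x$. A structure is unary FA-presentable if there exist a regular language $L\subseteq a^*$ and a surjection $\phi:L\to X$ such that for equality and for the relation, the set of pairs $(u,v)\in L^2$ whose images are related is regular (i.e. the set of words $\mathrm{conv}(u,v)$ over $\{a,\$\}^2$, reading both words in parallel with the shorter padded by $\$$, is a regular language). A unary FA-foundational binary relation is a finite set $Q$ with a relation $\rho$ and pairwise disjoint five-element subsets (seeds) $P_k=\{p^{(k)}_1,\dots,p^{(k)}_5\}$, $0\le k\le n-1$ ($n\ge0$), such that with $Q'=Q\setminus\bigcup_k P_k$, for all $k,l$ (possibly equal) and $q\in Q'$: (1) the statements $p^{(k)}_i\rho p^{(l)}_i$ ($1\le i\le5$) are all true or all false; (2) the statements $p^{(k)}_i\rho p^{(l)}_{i+1}$ ($1\le i\le4$) are all true or all false; (3) the statements $p^{(k)}_{i+1}\rho p^{(l)}_i$ ($1\le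 i\le 4$) are all true or all false; (4) the statements $p^{(k)}_i\rho p^{(l)}_j$ with $j-i\ge2$ are all true or all false; (5) the statements $p^{(k)}_j\rho p^{(l)}_i$ with $j-i\ge2$ are all true or all false; (6) the statements $q\rho p^{(k)}_i$ ($2\le i\le5$) are all true or all false; (7) the statements $p^{(k)}_i\rho q$ ($2\le i\le 5$) are all true or all false. A unary FA-foundational quasi-order is one in which $\rho$ is a quasi-order on $Q$. Propagation yields $(\hat Q,\hat\rho)$ with $\hat Q=Q'\cup\{p^{(k)}_i:0\le k<n,\ i\in\mathbb{N}\}$ ($\mathbb{N}=\{1,2,\dots\}$, new elements for $i\ge6$) and: $\hat\rho=\rho$ on $Q'$; $p^{(k)}_i\hat\rho p^{(l)}_j$ iff [$j=i$ and $p^{(k)}_1\rho p^{(l)}_1$] or [$j=i+1$ and $p^{(k)}_1\rho p^{(l)}_2$] or [$j=i-1$ and $p^{(k)}_2\rho p^{(l)}_1$] or [$j\ge i+2$ and $p^{(k)}_1\rho p^{(l)}_3$] or [$j\le i-2$ and $p^{(k)}_3\rho p^{(l)}_1$]; for $q\in Q'$: $q\hat\rho p^{(k)}_1$ iff $q\rho p^{(k)}_1$, $q\hat\rho p^{(k)}_i$ ($i\ge2$) iff $q\rho p^{(k)}_2$, $p^{(k)}_1\hat\rho q$ iff $p^{(k)}_1\rho q$, $p^{(k)}_i\hat\rho q$ ($i\ge2$) iff $p^{(k)}_2\rho q$. *)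

(* Defs.v *)
From mathcomp Require Import all_boot.
Set Implicit Arguments. Unset Strict Implicit. Unset Printing Implicit Defensive.

Record dfa (S : finType) := Dfa {
  dfa_state : finType;
  dfa_start : dfa_state;
  dfa_delta : dfa_state -> S -> dfa_state;
  dfa_final : pred dfa_state }.

Definition dfa_accepts (S : finType) (A : dfa S) (w : seq S) : bool :=
  @dfa_final S A (foldl (@dfa_delta S A) (@dfa_start S A) w).

Definition regular (S : finType) (Lang : seq S -> Prop) : Prop :=
  exists A : dfa S, forall w, dfa_accepts A w <-> Lang w.

(* Convolution: both words read in parallel, the shorter padded with $ (= None). *)
Definition conv (A B : Type) (u : seq A) (v : seq B) : seq (option A * option B) :=
  mkseq (fun i => (onth u i, onth v i)) (maxn (size u) (size v)).

(* Unary words: the alphabet {a} is [unit] (a = tt);  a^* = seq unit. *)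
Definition uword := seq unit.

Definition rel_lang (X : Type) (L : uword -> Prop) (phi : {w : uword | L w} -> X)
  (R : X -> X -> Prop) : seq (option unit * option unit) -> Prop :=
  fun w => exists (u v : {w : uword | L w}),
      w = conv (sval u) (sval v) /\ R (phi u) (phi v).

Definition unary_FA_presentable (X : Type) (le : X -> X -> Prop) : Prop :=
  exists (L : uword -> Prop) (phi : {w : uword | L w} -> X),
    regular L /\
    (forall x : X, exists u, phi u = x) /\
    regular (rel_lang phi (fun x y => x = y)) /\
    regular (rel_lang phi le).

Definition quasi_order (X : Type) (le : X -> X -> Prop) : Prop :=
  (forall x, le x x) /\ (forall x y z, le x y -> le y z -> le x z).

Definition qo_iso (X Y : Type) (leX : X -> X -> Prop) (leY : Y -> Y -> Prop) : Prop :=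
  exists f : X -> Y, bijective f /\ forall x y, leX x y <-> leY (f x) (f y).

(* ---------- Unary FA-foundational relations ----------
   Seeds are given by p : 'I_n -> 'I_5 -> Q; the paper's element p^{(k)}_i
   (1 <= i <= 5) is  p k (i-1)  (0-based ordinal index). *)
Definition o0 : 'I_5 := @Ordinal 5 0 isT.
Definition o1 : 'I_5 := @Ordinal 5 1 isT.
Definition o2 : 'I_5 := @Ordinal 5 2 isT.

Section Found.
Variables (Q : finType) (rho : rel Q) (n : nat) (p : 'I_n -> 'I_5 -> Q).

Definition nonseed (q : Q) : Prop := forall k i, p k i <> q.

Definition FA_foundational : Prop :=
  (forall k i l j, p k i = p l j -> k = l /\ i = j) /\
  forall k l : 'I_n,
  (forall i j : 'I_5, rho (p k i) (p l i) <-> rho (p k j) (p l j)) /\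
  (forall i i' j j' : 'I_5, val i' = (val i).+1 -> val j' = (val j).+1 ->
      (rho (p k i) (p l i') <-> rho (p k j) (p l j'))) /\
  (forall i i' j j' : 'I_5, val i' = (val i).+1 -> val j' = (val j).+1 ->
      (rho (p k i') (p l i) <-> rho (p k j') (p l j))) /\
  (forall i j i' j' : 'I_5, (val i).+2 <= val j -> (val i').+2 <= val j' ->
      (rho (p k i) (p l j) <-> rho (p k i') (p l j'))) /\
  (forall i j i' j' : 'I_5, (val i).+2 <= val j -> (val i').+2 <= val j' ->
      (rho (p k j) (p l i) <-> rho (p k j') (p l i'))) /\
  (* (6) and (7): paper indices 2..5 = ordinals 1..4 *)
  (forall q : Q, nonseed q ->
     (forall i j : 'I_5, 0 < val i -> 0 < val j ->
        (rho q (p k i) <-> rho q (p k j))) /\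
     (forall i j : 'I_5, 0 < val i -> 0 < val j ->
        (rho (p k i) q <-> rho (p k j) q))).

(* ---------- Propagation ----------
   hat Q = Q' + ('I_n * nat), where (k, m) stands for p^{(k)}_{m+1}. *)
Definition hatQ : Type := ({q : Q | nonseed q} + ('I_n * nat))%type.

Definition hatrho (x y : hatQ) : Prop :=
  match x, y with
  | inl q, inl q' => rho (sval q) (sval q')
  | inl q, inr (k, m) =>
      if m == 0 then rho (sval q) (p k o0) else rho (sval q) (p k o1)
  | inr (k, m), inl q =>
      if m == 0 then rho (p k o0) (sval q) else rho (p k o1) (sval q)
  | inr (k, i), inr (l, j) =>
      (j = i /\ rho (p k o0) (p l o0)) \/
      (j = i.+1 /\ rho (p k o0) (p l o1)) \/
      (j.+1 = i /\ rho (p k o1) (p l o0)) \/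
      (i.+2 <= j /\ rho (p k o0) (p l o2)) \/
      (j.+2 <= i /\ rho (p k o2) (p l o0))
  end.

Definition seed_antichain (k : 'I_n) : Prop :=
  forall i j : 'I_5, i != j -> ~ rho (p k i) (p k j).
Definition seed_ascending (k : 'I_n) : Prop :=
  forall i i' : 'I_5, val i' = (val i).+1 ->
    rho (p k i) (p k i') /\ ~ rho (p k i') (p k i).
Definition seed_descending (k : 'I_n) : Prop :=
  forall i i' : 'I_5, val i' = (val i).+1 ->
    rho (p k i') (p k i) /\ ~ rho (p k i) (p k i').
Definition seed_scc (k : 'I_n) : Prop :=
  forall i j : 'I_5, rho (p k i) (p k j).

Definition seed_ok (k : 'I_n) : Prop :=
  seed_antichain k \/ seed_ascending k \/ seed_descending k \/ seed_scc k.
End Found.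
Arguments hatrho {Q} rho {n} p x y.

(* Main.v *)
Require Import Defs.
From mathcomp Require Import all_boot.
Set Warnings "-notation-overridden".
From mathcomp Require Import zify.
From Stdlib Require Import ProofIrrelevance IndefiniteDescription ClassicalEpsilon.
Set Implicit Arguments. Unset Strict Implicit. Unset Printing Implicit Defensive.

Module PartA.

Definition us (s : nat) : uword := nseq s tt.
Notation SS := (Some tt, Some tt).
Notation SN := (Some tt, @None unit).
Notation NS := (@None unit, Some tt).

Lemma uword_eq (w : uword) : w = us (size w).
Proof. elim: w => [|[] w IH] //=. by rewrite /us /= {1}IH. Qed.

Lemma size_us s : size (us s) = s.
Proof. by rewrite size_nseq. Qed.

Lemma onth_mkseq T (f : nat -> T) n i :
  onth (mkseq f n) i = if i < n then Some (f i) else None.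
Proof.
rewrite onthE /mkseq -map_comp -/(mkseq _ n); case: ltnP => H.
  by rewrite nth_mkseq.
by rewrite nth_default // size_mkseq.
Qed.

Lemma conv_us s t : conv (us s) (us t) =
  nseq (minn s t) SS ++ nseq (s - t) SN ++ nseq (t - s) NS.
Proof.
apply: eq_from_onth => i.
rewrite /conv onth_mkseq !onth_cat !size_nseq /us !onth_nseq ?size_nseq.
by repeat (case: ifP => ?); try done; lia.
Qed.

Lemma count_conv s t : count (fun x => x.1 != None) (conv (us s) (us t)) = s.
Proof. rewrite conv_us !count_cat !count_nseq /=; lia. Qed.
Lemma count_conv2 s t : count (fun x => x.2 != None) (conv (us s) (us t)) = t.
Proof. rewrite conv_us !count_cat !count_nseq /=; lia. Qed.

Lemma conv_inj s t s' t' : conv (us s) (us t) = conv (us s') (us t') -> s = s' /\ t = t'.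
Proof.
move=> H; split.
  by rewrite -(count_conv s t) -(count_conv s' t') H.
by rewrite -(count_conv2 s t) -(count_conv2 s' t') H.
Qed.

Lemma foldl_nseq (T S : Type) (f : S -> T -> S) q m c :
  foldl f q (nseq m c) = iter m (fun q => f q c) q.
Proof. elim: m q => [|m IH] q //. by rewrite iterSr -IH. Qed.

Lemma iter_pigeon (S : finType) (f : S -> S) q :
  exists a b, a < b <= #|S| /\ iter a f q = iter b f q.
Proof.
pose g (i : 'I_#|S|.+1) := iter i f q.
have : ~~ injectiveb g.
  apply/negP => /injectiveP Hi; have := @leq_card _ _ g Hi.
  by rewrite card_ord ltnn.
move/injectivePn => [x [y Hxy Hg]].
have Hx := ltn_ord x; have Hy := ltn_ord y.
case: (ltngtP x y) => Hc.
- exists x, y; split; first by rewrite Hc -ltnS.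
  exact: Hg.
- exists y, x; split; first by rewrite Hc -ltnS.
  by rewrite /g in Hg; rewrite Hg.
- by move/val_inj: Hc => Hc; rewrite Hc eqxx in Hxy.
Qed.

Lemma iter_period (S : finType) (f : S -> S) q m P :
  #|S| <= m -> #|S|`! %| P -> iter (m + P) f q = iter m f q.
Proof.
move=> Hm HP.
have [a [b [/andP [Hab Hb] He]]] := iter_pigeon f q.
have Hd : (b - a) %| P.
  apply: dvdn_trans HP; apply: dvdn_fact; apply/andP; split; lia.
case/dvdnP: Hd => k ->.
have Hs : forall j, a <= j -> iter (j + (b - a)) f q = iter j f q.
  move=> j Hj.
  have -> : j + (b - a) = (j - a) + b by lia.
  rewrite iterD -He -iterD; congr iter; lia.
elim: k => [|k IH]; first by rewrite mul0n addn0.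
have -> : m + k.+1 * (b - a) = (m + k * (b - a)) + (b - a) by rewrite mulSn; lia.
rewrite Hs; first exact: IH.
have : a <= b by lia. lia.
Qed.

Definition accU (A : dfa unit) s := dfa_accepts A (us s).
Definition PA := (option unit * option unit)%type.
Definition accP (A : dfa PA) s t := dfa_accepts A (conv (us s) (us t)).

Lemma accU_iter A s :
  accU A s = dfa_final (iter s (fun q => dfa_delta q tt) (dfa_start A)).
Proof. by rewrite /accU /dfa_accepts /us foldl_nseq. Qed.

Lemma accP_iter A s t : accP A s t =
  dfa_final (iter (t - s) (fun q => dfa_delta q NS)
    (iter (s - t) (fun q => dfa_delta q SN)
      (iter (minn s t) (fun q => dfa_delta q SS) (dfa_start A)))).
Proof. by rewrite /accP /dfa_accepts conv_us !foldl_cat !foldl_nseq. Qed.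

Section Shift.
Variables (T P : nat).

Lemma accU_shift A s : #|dfa_state A| <= T -> #|dfa_state A|`! %| P ->
  T <= s -> accU A (s + P) = accU A s.
Proof. move=> H1 H2 H3; rewrite !accU_iter iter_period //. exact: leq_trans H1 H3. Qed.

Lemma accP_both A s t : #|dfa_state A| <= T -> #|dfa_state A|`! %| P ->
  T <= minn s t -> accP A (s + P) (t + P) = accP A s t.
Proof.
move=> H1 H2 H3; rewrite !accP_iter.
have -> : minn (s + P) (t + P) = minn s t + P by lia.
have -> : s + P - (t + P) = s - t by lia.
have -> : t + P - (s + P) = t - s by lia.
rewrite iter_period //; apply: leq_trans H1 _; lia.
Qed.

Lemma accP_r A s t : #|dfa_state A| <= T -> #|dfa_state A|`! %| P ->
  s + T <= t -> accP A s (t + P) = accP A s t.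
Proof.
move=> H1 H2 H3; rewrite !accP_iter.
have -> : minn s (t + P) = minn s t by lia.
have -> : s - (t + P) = s - t by lia.
have -> : t + P - s = (t - s) + P by lia.
rewrite iter_period //; apply: leq_trans H1 _; lia.
Qed.

Lemma accP_l A s t : #|dfa_state A| <= T -> #|dfa_state A|`! %| P ->
  t + T <= s -> accP A (s + P) t = accP A s t.
Proof.
move=> H1 H2 H3; rewrite !accP_iter.
have -> : minn (s + P) t = minn s t by lia.
have -> : t - (s + P) = t - s by lia.
have -> : s + P - t = (s - t) + P by lia.
rewrite [X in iter (t - s) _ X]iter_period //; apply: leq_trans H1 _; lia.
Qed.
End Shift.

End PartA.
Import PartA.

Module PartB.

Section Forward.
Variables (X : Type) (le : X -> X -> Prop).
Hypothesis Hqo : quasi_order le.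
Variables (L : uword -> Prop) (phi : {w : uword | L w} -> X).
Variables (AL : dfa unit) (AE AR : dfa PA).
Hypothesis HL : forall w, dfa_accepts AL w <-> L w.
Hypothesis Hsurj : forall x : X, exists u, phi u = x.
Hypothesis HE : forall w, dfa_accepts AE w <-> rel_lang phi (fun x y => x = y) w.
Hypothesis HR : forall w, dfa_accepts AR w <-> rel_lang phi le w.

Definition inL s := accU AL s.
Definition E s t := accP AE s t.
Definition Rr s t := accP AR s t.

Lemma inLP s : inL s -> L (us s).
Proof. exact: (proj1 (HL (us s))). Qed.

Definition mk s (h : inL s) : {w | L w} := exist _ (us s) (inLP h).

Lemma sig_eqL (u v : {w | L w}) : sval u = sval v -> u = v.
Proof. case: u v => [u hu] [v hv] /= E; subst; f_equal; apply: proof_irrelevance. Qed.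

Lemma rel_spec (A : dfa PA) (R : X -> X -> Prop) :
  (forall w, dfa_accepts A w <-> rel_lang phi R w) ->
  forall s t (hs : inL s) (ht : inL t), accP A s t <-> R (phi (mk hs)) (phi (mk ht)).
Proof.
move=> HA s t hs ht; rewrite /accP HA; split.
  case=> u [v [Hc HR']].
  rewrite (uword_eq (sval u)) (uword_eq (sval v)) in Hc.
  case: (conv_inj Hc) => Hs Ht.
  have -> : mk hs = u by apply: sig_eqL; rewrite /= (uword_eq (sval u)) Hs.
  have -> : mk ht = v by apply: sig_eqL; rewrite /= (uword_eq (sval v)) Ht.
  exact: HR'.
move=> H; exists (mk hs), (mk ht); split => //.
Qed.

Lemma mk_irr s t (hs : inL s) (ht : inL t) : s = t -> mk hs = mk ht.
Proof. by move=> Est; apply: sig_eqL; rewrite /= Est. Qed.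

Lemma E_spec s t (hs : inL s) (ht : inL t) : E s t <-> phi (mk hs) = phi (mk ht).
Proof. exact: rel_spec. Qed.
Lemma Rr_spec s t (hs : inL s) (ht : inL t) : Rr s t <-> le (phi (mk hs)) (phi (mk ht)).
Proof. exact: rel_spec. Qed.

Lemma E_sym s t : inL s -> inL t -> E s t -> E t s.
Proof. move=> hs ht /(E_spec hs ht) H; apply/(E_spec ht hs); by rewrite H. Qed.

Lemma E_trans s t u : inL s -> inL t -> inL u -> E s t -> E t u -> E s u.
Proof.
move=> hs ht hu /(E_spec hs ht) H1 /(E_spec ht hu) H2; apply/(E_spec hs hu).
by rewrite H1.
Qed.

Lemma E_refl s : inL s -> E s s.
Proof. by move=> hs; apply/(E_spec hs hs). Qed.

Lemma Rr_refl s : inL s -> Rr s s.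
Proof. move=> hs; apply/(Rr_spec hs hs); exact: (proj1 Hqo). Qed.

Lemma Rr_trans s t u : inL s -> inL t -> inL u -> Rr s t -> Rr t u -> Rr s u.
Proof.
move=> hs ht hu /(Rr_spec hs ht) H1 /(Rr_spec ht hu) H2; apply/(Rr_spec hs hu).
exact: (proj2 Hqo) H1 H2.
Qed.

Definition T := #|dfa_state AL| + #|dfa_state AE| + #|dfa_state AR|.
Definition P := #|dfa_state AL|`! * #|dfa_state AE|`! * #|dfa_state AR|`!.

Lemma P_gt0 : 0 < P.
Proof. by rewrite /P !muln_gt0 !fact_gt0. Qed.

Lemma TL : #|dfa_state AL| <= T. Proof. rewrite /T; lia. Qed.
Lemma TE : #|dfa_state AE| <= T. Proof. rewrite /T; lia. Qed.
Lemma TR : #|dfa_state AR| <= T. Proof. rewrite /T; lia. Qed.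
Lemma PL c : #|dfa_state AL|`! %| c * P.
Proof. by apply: dvdn_mull; rewrite /P -mulnA dvdn_mulr. Qed.
Lemma PE c : #|dfa_state AE|`! %| c * P.
Proof. by apply: dvdn_mull; rewrite /P mulnAC dvdn_mull // dvdn_mulr. Qed.
Lemma PR c : #|dfa_state AR|`! %| c * P.
Proof. by apply: dvdn_mull; rewrite /P dvdn_mull. Qed.

Lemma inL_sh c s : T <= s -> inL (s + c * P) = inL s.
Proof. exact: (accU_shift TL (PL c)). Qed.
Lemma E_both c s t : T <= minn s t -> E (s + c * P) (t + c * P) = E s t.
Proof. exact: (accP_both TE (PE c)). Qed.
Lemma E_r c s t : s + T <= t -> E s (t + c * P) = E s t.
Proof. exact: (accP_r TE (PE c)). Qed.
Lemma Rr_both c s t : T <= minn s t -> Rr (s + c * P) (t + c * P) = Rr s t.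
Proof. exact: (accP_both TR (PR c)). Qed.
Lemma Rr_r c s t : s + T <= t -> Rr s (t + c * P) = Rr s t.
Proof. exact: (accP_r TR (PR c)). Qed.
Lemma Rr_l c s t : t + T <= s -> Rr (s + c * P) t = Rr s t.
Proof. exact: (accP_l TR (PR c)). Qed.

Definition dup s := [exists t : 'I_s, inL t && E t s].
Definition Rep s := inL s && ~~ dup s.

Lemma RepL s : Rep s -> inL s. Proof. by case/andP. Qed.

Lemma dup_sh s : 2 * T + P <= s -> dup (s + P) = dup s.
Proof.
move=> Hs; have HP := P_gt0.
apply/existsP/existsP => [[t /andP [ht He]] | [t /andP [ht He]]].
- case: (leqP (T + P) t) => Ht.
  + have Ht' : t - P + 1 * P = t by lia.
    have Hlt : t - P < s by have := ltn_ord t; lia.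
    exists (Ordinal Hlt); apply/andP; split.
      by rewrite /= -(inL_sh 1); [rewrite Ht' | lia].
    by rewrite /= -(E_both 1) ?Ht' ?mul1n //; lia.
  + have Hlt : t < s by lia.
    exists (Ordinal Hlt); apply/andP; split => //.
    by rewrite /= -(E_r 1) ?mul1n //; lia.
- case: (leqP T t) => Ht.
  + have Hlt : t + 1 * P < s + P by have := ltn_ord t; lia.
    exists (Ordinal Hlt); apply/andP; split.
      by rewrite /= inL_sh.
    rewrite /=; have -> : s + P = s + 1 * P by rewrite mul1n.
    rewrite E_both //; have := ltn_ord t; lia.
  + have Hlt : t < s + P by have := ltn_ord t; lia.
    exists (Ordinal Hlt); apply/andP; split => //.
    rewrite /=; have -> : s + P = s + 1 * P by rewrite mul1n.
    by rewrite E_r //; lia.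
Qed.

Lemma Rep_sh c s : 2 * T + P <= s -> Rep (s + c * P) = Rep s.
Proof.
move=> Hs; elim: c => [|c IH]; first by rewrite mul0n addn0.
have -> : s + c.+1 * P = (s + c * P) + P by rewrite mulSn; lia.
rewrite /Rep dup_sh; last lia.
have := inL_sh 1 (s := s + c * P); rewrite mul1n => ->; last lia.
exact: IH.
Qed.

Lemma Rep_uniq s t : Rep s -> Rep t -> E s t -> s = t.
Proof.
move=> /andP [hs ds] /andP [ht dt] He.
case: (ltngtP s t) => // Hc.
- case/negP: dt; apply/existsP; exists (Ordinal Hc); by rewrite /= hs.
- case/negP: ds; apply/existsP; exists (Ordinal Hc); rewrite /= ht.
  exact: E_sym.
Qed.

Definition B := 2 * T + P.
Definition N := P * T.+1.
Lemma N_gt : T < N.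
Proof. have := P_gt0; rewrite /N; case: P => // p _; rewrite mulSn; lia. Qed.
Lemma N_mul c : c * N = c * T.+1 * P.
Proof. by rewrite /N [P * _]mulnC mulnA. Qed.
Lemma B_ge : T <= B. Proof. rewrite /B; lia. Qed.

Definition rs := [seq r <- iota 0 N | Rep (B + r)].
Definition n := size rs.
Definition res (k : 'I_n) := nth 0 rs k.

Lemma res_in k : res k \in rs.
Proof. exact: mem_nth. Qed.
Lemma res_lt k : res k < N.
Proof. by have := res_in k; rewrite mem_filter mem_iota => /andP [_ /andP [_]]. Qed.
Lemma Rep_res k : Rep (B + res k).
Proof. by have := res_in k; rewrite mem_filter => /andP []. Qed.
Lemma res_inj : injective res.
Proof.
move=> k l; rewrite /res => H; apply: val_inj; apply/eqP.
rewrite -(nth_uniq 0 (ltn_ord k) (ltn_ord l)); first by rewrite H.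
by rewrite filter_uniq // iota_uniq.
Qed.
Lemma res_surj r : r < N -> Rep (B + r) -> exists k, res k = r.
Proof.
move=> Hr HRep.
have Hin : r \in rs by rewrite mem_filter HRep mem_iota /=.
have Hi : index r rs < n by rewrite /n index_mem.
exists (Ordinal Hi); by rewrite /res nth_index.
Qed.

Definition len (k : 'I_n) m := B + res k + m * N.

Lemma Rep_len k m : Rep (len k m).
Proof. rewrite /len N_mul Rep_sh ?Rep_res //; rewrite /B; lia. Qed.
Lemma inL_len k m : inL (len k m).
Proof. exact: RepL (Rep_len k m). Qed.
Lemma len_ge k m : B + m * N <= len k m.
Proof. rewrite /len; lia. Qed.
Lemma len_geB k m : B <= len k m.
Proof. rewrite /len; lia. Qed.
Lemma lenD k m c : len k (m + c) = len k m + c * T.+1 * P.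
Proof. by rewrite /len mulnDl (N_mul c) addnA. Qed.

Lemma len_inj k l i j : len k i = len l j -> k = l /\ i = j.
Proof.
rewrite /len => H.
have Hk := res_lt k; have Hl := res_lt l.
have H1 : res k + i * N = res l + j * N by lia.
have Hij : i = j.
  case: (ltngtP i j) => Hc //.
    have : i.+1 * N <= j * N by apply: leq_mul.
    rewrite mulSn; lia.
  have : j.+1 * N <= i * N by apply: leq_mul.
  rewrite mulSn; lia.
subst j; split => //; apply: res_inj; lia.
Qed.

Definition cls (i j : nat) : nat * nat :=
  if i == j then (0, 0) else if j == i.+1 then (0, 1)
  else if i == j.+1 then (1, 0) else if i < j then (0, 2) else (2, 0).

Lemma Rr_diag k l i j : i <= j -> Rr (len k i) (len l j) = Rr (len k 0) (len l (j - i)).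
Proof.
move=> Hij.
have -> : len k i = len k 0 + i * T.+1 * P by rewrite -lenD.
have -> : len l j = len l (j - i) + i * T.+1 * P by rewrite -lenD; congr len; lia.
rewrite Rr_both //; have := len_geB k 0; have := len_geB l (j - i); have := B_ge; lia.
Qed.

Lemma Rr_diag' k l i j : j <= i -> Rr (len k i) (len l j) = Rr (len k (i - j)) (len l 0).
Proof.
move=> Hij.
have -> : len l j = len l 0 + j * T.+1 * P by rewrite -lenD.
have -> : len k i = len k (i - j) + j * T.+1 * P by rewrite -lenD; congr len; lia.
rewrite Rr_both //; have := len_geB l 0; have := len_geB k (i - j); have := B_ge; lia.
Qed.

Lemma Rr_far k l d : 2 <= d -> Rr (len k 0) (len l d) = Rr (len k 0) (len l 2).
Proof.
move=> Hd.
have -> : len l d = len l 2 + (d - 2) * T.+1 * P by rewrite -lenD; congr len; lia.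
rewrite Rr_r //; have := res_lt k; have := N_gt; rewrite /len; lia.
Qed.

Lemma Rr_far' k l d : 2 <= d -> Rr (len k d) (len l 0) = Rr (len k 2) (len l 0).
Proof.
move=> Hd.
have -> : len k d = len k 2 + (d - 2) * T.+1 * P by rewrite -lenD; congr len; lia.
rewrite Rr_l //; have := res_lt l; have := N_gt; rewrite /len; lia.
Qed.

Lemma Rr_seed k l i j :
  Rr (len k i) (len l j) = Rr (len k (cls i j).1) (len l (cls i j).2).
Proof.
rewrite /cls; case: (leqP i j) => Hij.
- rewrite Rr_diag //.
  case: ifP => [/eqP->|/negbT/eqP H1]; first by rewrite subnn.
  case: ifP => [/eqP->|/negbT/eqP H2]; first by rewrite subSnn.
  case: ifP => [/eqP H3|_]; first lia.
  case: ifP => [_|/negbT H4]; last by rewrite -leqNgt in H4; lia.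
  rewrite Rr_far //; lia.
- rewrite Rr_diag'; last lia.
  case: ifP => [/eqP H1|_]; first lia.
  case: ifP => [/eqP H2|_]; first lia.
  case: ifP => [/eqP->|/negbT/eqP H3]; first by rewrite subSnn.
  case: ifP => [H4|_]; first lia.
  rewrite Rr_far' //; lia.
Qed.


Lemma Rr_cross q l m : q < B -> 0 < m -> Rr q (len l m) = Rr q (len l 1).
Proof.
move=> Hq Hm.
have -> : len l m = len l 1 + (m - 1) * T.+1 * P by rewrite -lenD; congr len; lia.
rewrite Rr_r //; have := len_ge l 1; have := N_gt; lia.
Qed.

Lemma Rr_cross' q l m : q < B -> 0 < m -> Rr (len l m) q = Rr (len l 1) q.
Proof.
move=> Hq Hm.
have -> : len l m = len l 1 + (m - 1) * T.+1 * P by rewrite -lenD; congr len; lia.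
rewrite Rr_l //; have := len_ge l 1; have := N_gt; lia.
Qed.

Lemma Rr_within k : Rr (len k 0) (len k 2) = Rr (len k 0) (len k 1).
Proof.
have -> : len k 2 = len k 1 + 1 * T.+1 * P by rewrite -lenD.
rewrite Rr_r //; have := N_gt; rewrite /len; lia.
Qed.
Lemma Rr_within' k : Rr (len k 2) (len k 0) = Rr (len k 1) (len k 0).
Proof.
have -> : len k 2 = len k 1 + 1 * T.+1 * P by rewrite -lenD.
rewrite Rr_l //; have := N_gt; rewrite /len; lia.
Qed.

Lemma Rr_seed_self k i j : Rr (len k i) (len k j) =
  if i == j then true else if i < j then Rr (len k 0) (len k 1) else Rr (len k 1) (len k 0).
Proof.
rewrite Rr_seed /cls.
case: eqP => H1; first by rewrite /= Rr_refl // inL_len.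
case: eqP => H2; first by rewrite ifT //; lia.
case: eqP => H3; first by rewrite ifF //; apply/negbTE; rewrite -leqNgt; lia.
case: ifP => H4; first exact: Rr_within.
exact: Rr_within'.
Qed.



Definition M := B + 5 * N.
Lemma len_lt k (i : 'I_5) : len k i < M.
Proof.
have Hi : i * N <= 4 * N by apply: leq_mul => //; have := ltn_ord i; lia.
have := res_lt k; rewrite /len /M; lia.
Qed.

Notation Qt := {s : 'I_M | Rep s}.
Definition qv (x : Qt) : nat := sval x.
Definition rho : rel Qt := fun x y => Rr (qv x) (qv y).
Definition pp (k : 'I_n) (i : 'I_5) : Qt :=
  exist (fun s : 'I_M => Rep s) (Ordinal (len_lt k i)) (Rep_len k i).

Lemma qv_pp k i : qv (pp k i) = len k i. Proof. by []. Qed.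

Lemma nonseed_lt (q : Qt) : nonseed pp q -> qv q < B.
Proof.
move=> Hns; rewrite ltnNge; apply/negP => Hq.
have Hs : qv q < M by rewrite /qv; exact: ltn_ord.
have HRq : Rep (qv q) by rewrite /qv; exact: (valP q).
have HN : 0 < N by have := N_gt; lia.
have Hd := divn_eq (qv q - B) N.
have Hr : (qv q - B) %% N < N by rewrite ltn_mod.
have Hm : (qv q - B) %/ N < 5 by rewrite ltn_divLR //; rewrite /M in Hs; lia.
have HRr : Rep (B + (qv q - B) %% N).
  rewrite -(Rep_sh ((qv q - B) %/ N * T.+1)); last by rewrite /B; lia.
  by rewrite -N_mul; have -> : B + (qv q - B) %% N + (qv q - B) %/ N * N = qv q by lia.
case: (res_surj Hr HRr) => k Hk.
apply: (Hns k (Ordinal Hm)); apply: val_inj; apply: val_inj => /=.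
rewrite /len Hk; rewrite /qv in Hd Hq *; lia.
Qed.

Definition lenH (x : hatQ pp) : nat :=
  match x with inl q => qv (sval q) | inr km => len km.1 km.2 end.
Definition RepH (x : hatQ pp) : Rep (lenH x) :=
  match x as x return Rep (lenH x) with
  | inl q => valP (sval q)
  | inr km => Rep_len km.1 km.2 end.
Definition inLH (x : hatQ pp) : inL (lenH x) := RepL (RepH x).
Definition g (x : hatQ pp) : X := phi (mk (inLH x)).

Lemma g_le x y : le (g x) (g y) <-> Rr (lenH x) (lenH y).
Proof. exact: iff_sym (Rr_spec _ _). Qed.

Lemma lenH_inj : injective lenH.
Proof.
case=> [q|[k m]] [q'|[l m']] /= H.
- congr inl; case: q q' H => [q hq] [q' hq'] /= H.
  have Hq : q = q' by apply: val_inj; apply: val_inj.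
  subst; f_equal; apply: proof_irrelevance.
- case: q H => [q hq] /= H; have := nonseed_lt hq; have := len_geB l m'; lia.
- case: q' H => [q hq] /= H; have := nonseed_lt hq; have := len_geB k m; lia.
- by case: (len_inj H) => -> ->.
Qed.

Lemma g_inj : injective g.
Proof.
move=> x y /(E_spec (inLH x) (inLH y)) H.
apply: lenH_inj; exact: Rep_uniq (RepH x) (RepH y) H.
Qed.

Lemma mk_eq s t (hs : inL s) (ht : inL t) : s = t -> phi (mk hs) = phi (mk ht).
Proof. by move=> H; rewrite (mk_irr hs ht H). Qed.

Lemma g_surj x : exists y, g y = x.
Proof.
case: (Hsurj x) => u Hu.
set s0 := size (sval u).
have hs0 : inL s0 by apply/HL; rewrite /s0 -uword_eq; exact: (proj2_sig u).
have Hu0 : mk hs0 = u by apply: sig_eqL; rewrite /= /s0 -uword_eq.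
have Hex : exists s, inL s && E s s0 by exists s0; rewrite hs0 E_refl.
case: (ex_minnP Hex) => s /andP [hs Hss0] Hmin.
have HRs : Rep s.
  rewrite /Rep hs /=; apply/negP => /existsP [t /andP [ht Hts]].
  have : s <= t by apply: Hmin; rewrite ht (E_trans ht hs hs0 Hts Hss0).
  have := ltn_ord t; lia.
have Hx : phi (mk hs) = x by rewrite -Hu -Hu0; apply/E_spec.
case: (ltnP s B) => HsB.
- have HsM : s < M by rewrite /M; lia.
  pose q : Qt := exist (fun s : 'I_M => Rep s) (Ordinal HsM) HRs.
  have Hns : nonseed pp q.
    move=> k i Heq; have := congr1 qv Heq; rewrite qv_pp /qv /=.
    have := len_geB k i; lia.
  exists (inl (exist _ q Hns)); rewrite -Hx /g; exact: mk_eq.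
- have HN : 0 < N by have := N_gt; lia.
  have Hd := divn_eq (s - B) N.
  have Hr : (s - B) %% N < N by rewrite ltn_mod.
  have HRr : Rep (B + (s - B) %% N).
    rewrite -(Rep_sh ((s - B) %/ N * T.+1)); last by rewrite /B; lia.
    by rewrite -N_mul; have -> : B + (s - B) %% N + (s - B) %/ N * N = s by lia.
  case: (res_surj Hr HRr) => k Hk.
  exists (inr (k, (s - B) %/ N)); rewrite -Hx /g; apply: mk_eq.
  rewrite /= /len Hk; lia.
Qed.

Lemma cls_eq i : cls i i = (0, 0). Proof. by rewrite /cls eqxx. Qed.
Lemma cls_S i : cls i i.+1 = (0, 1).
Proof. by rewrite /cls ifF ?eqxx //; apply/negbTE; rewrite neq_ltn ltnSn. Qed.
Lemma cls_P i : cls i.+1 i = (1, 0).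
Proof.
rewrite /cls ifF; last by apply/negbTE; rewrite neq_ltn ltnSn orbT.
by rewrite ifF ?eqxx //; apply/negbTE; rewrite neq_ltn; apply/orP; left; lia.
Qed.
Lemma cls_far i j : i.+2 <= j -> cls i j = (0, 2).
Proof.
move=> H; rewrite /cls.
case: eqP => H1; first lia. case: eqP => H2; first lia. case: eqP => H3; first lia.
by rewrite ifT //; lia.
Qed.
Lemma cls_far' i j : i.+2 <= j -> cls j i = (2, 0).
Proof.
move=> H; rewrite /cls.
case: eqP => H1; first lia. case: eqP => H2; first lia. case: eqP => H3; first lia.
by rewrite ifF //; apply/negbTE; rewrite -leqNgt; lia.
Qed.

Lemma hat_iff x y : hatrho rho pp x y <-> Rr (lenH x) (lenH y).
Proof.
case: x => [q|[k i]]; case: y => [q'|[l j]] /=.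
- by [].
- have Hq := nonseed_lt (proj2_sig q).
  case: j => [|j] /=; first by [].
  by rewrite (Rr_cross l (m := j.+1)).
- have Hq := nonseed_lt (proj2_sig q').
  case: i => [|i] /=; first by [].
  by rewrite (Rr_cross' k (m := i.+1)).
- rewrite Rr_seed /cls.
  case: eqP => [<-|H1].
    split; [case=> [[_ H]|[[? _]|[[? _]|[[? _]|[? _]]]]] | move=> H; left]; try by [];
      exfalso; lia.
  case: eqP => [->|H2].
    split; [case=> [[? _]|[[_ H]|[[? _]|[[? _]|[? _]]]]] | move=> H; right; left]; try by [];
      exfalso; lia.
  case: eqP => [->|H3].
    split; [case=> [[? _]|[[? _]|[[_ H]|[[? _]|[? _]]]]] | move=> H; right; right; left]; try by [];
      exfalso; lia.
  case: ifP => H4.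
    split; [case=> [[? _]|[[? _]|[[? _]|[[_ H]|[? _]]]]] | move=> H; right; right; right; left];
      try by []; try (exfalso; lia). split => //; lia.
  move/negbT: H4; rewrite -leqNgt => H4.
  split; [case=> [[? _]|[[? _]|[[? _]|[[? _]|[_ H]]]]] | move=> H; right; right; right; right];
    try by []; try (exfalso; lia). split => //; lia.
Qed.

Lemma forward : exists (Q : finType) (rho : rel Q) (n : nat) (p : 'I_n -> 'I_5 -> Q),
     quasi_order (fun x y => rho x y) /\
     FA_foundational rho p /\
     (forall k : 'I_n, seed_ok rho p k) /\
     qo_iso le (hatrho rho p).
Proof.
exists Qt, rho, n, pp; split; [|split; [|split]].
- split.
    move=> x; apply: Rr_refl; apply: RepL; exact: (valP x).
  move=> x y z; apply: Rr_trans; apply: RepL.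
  + exact: (valP x). + exact: (valP y). + exact: (valP z).
- split.
    move=> k i l j H; have := congr1 qv H; rewrite !qv_pp => /len_inj [-> Hij].
    by split => //; apply: val_inj.
  move=> k l; split; [|split; [|split; [|split; [|split]]]].
  + by move=> i j; rewrite /rho !qv_pp (Rr_seed k l i i) (Rr_seed k l j j) !cls_eq.
  + by move=> i i' j j' Hi Hj; rewrite /rho !qv_pp (Rr_seed k l i i') (Rr_seed k l j j') Hi Hj !cls_S.
  + by move=> i i' j j' Hi Hj; rewrite /rho !qv_pp (Rr_seed k l i' i) (Rr_seed k l j' j) Hi Hj !cls_P.
  + by move=> i j i' j' Hi Hj; rewrite /rho !qv_pp (Rr_seed k l i j) (Rr_seed k l i' j') !cls_far.
  + by move=> i j i' j' Hi Hj; rewrite /rho !qv_pp (Rr_seed k l j i) (Rr_seed k l j' i') !cls_far'.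
  + move=> q Hq; have HqB := nonseed_lt Hq.
    split=> i j Hi Hj; rewrite /rho !qv_pp.
      by rewrite (Rr_cross k (m := i)) // (Rr_cross k (m := j)).
    by rewrite (Rr_cross' k (m := i)) // (Rr_cross' k (m := j)).
- move=> k; rewrite /seed_ok.
  case Ha : (Rr (len k 0) (len k 1)); case Hb : (Rr (len k 1) (len k 0)).
  + right; right; right => i j; rewrite /rho !qv_pp Rr_seed_self Ha Hb.
    by case: ifP => //; case: ifP.
  + right; left => i i' Hi; rewrite /rho !qv_pp (Rr_seed_self k i i') (Rr_seed_self k i' i) Hi Ha Hb.
    rewrite ifF; last by apply/negbTE; rewrite neq_ltn ltnSn.
    rewrite ltnSn; split => //.
    rewrite ifF; last by apply/negbTE; rewrite neq_ltn ltnSn orbT.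
    by rewrite ltnNge leqnSn.
  + right; right; left => i i' Hi; rewrite /rho !qv_pp (Rr_seed_self k i i') (Rr_seed_self k i' i) Hi Ha Hb.
    rewrite ifF; last by apply/negbTE; rewrite neq_ltn ltnSn orbT.
    rewrite ltnNge leqnSn; split => //.
    rewrite ifF; last by apply/negbTE; rewrite neq_ltn ltnSn.
    by rewrite ltnSn.
  + left => i j Hij; rewrite /rho !qv_pp Rr_seed_self.
    have -> : (nat_of_ord i == nat_of_ord j) = false by exact: negbTE Hij.
    by case: ifP; rewrite ?Ha ?Hb.
- pose f x := sval (constructive_indefinite_description _ (g_surj x)).
  have gf : forall x, g (f x) = x.
    by move=> x; rewrite /f; case: constructive_indefinite_description.
  exists f; split.
    exists g => // y; apply: g_inj; by rewrite gf.
  move=> x y; rewrite hat_iff -g_le !gf //.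
Qed.
End Forward.

End PartB.
Import PartB.

Module PartC.

Lemma rcons_nseq T k (x : T) : rcons (nseq k x) x = nseq k.+1 x.
Proof. by elim: k => //= k ->. Qed.

Lemma rc_SS a : rcons (conv (us a) (us a)) SS = conv (us a.+1) (us a.+1).
Proof. by rewrite !conv_us !minnn !subnn /= !cats0 rcons_nseq. Qed.

Lemma rc_SN s t : t <= s -> rcons (conv (us s) (us t)) SN = conv (us s.+1) (us t).
Proof.
move=> H; rewrite !conv_us.
have -> : minn s.+1 t = t by lia.
have -> : minn s t = t by lia.
have -> : t - s.+1 = 0 by lia.
have -> : t - s = 0 by lia.
have -> : s.+1 - t = (s - t).+1 by lia.
by rewrite /= !cats0 rcons_cat rcons_nseq.
Qed.

Lemma rc_NS s t : s <= t -> rcons (conv (us s) (us t)) NS = conv (us s) (us t.+1).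
Proof.
move=> H; rewrite !conv_us.
have -> : minn s t.+1 = s by lia.
have -> : minn s t = s by lia.
have -> : s - t.+1 = 0 by lia.
have -> : s - t = 0 by lia.
have -> : t.+1 - s = (t - s).+1 by lia.
by rewrite /= rcons_cat rcons_nseq.
Qed.

Section Gen.
Variables (K M : nat) (Pred : nat -> nat -> Prop).
Hypothesis HM : 0 < M.
Hypothesis S1 : forall s t, K <= minn s t -> (Pred (s + M) (t + M) <-> Pred s t).
Hypothesis S2 : forall s t, s + K <= t -> (Pred s (t + M) <-> Pred s t).
Hypothesis S3 : forall s t, t + K <= s -> (Pred (s + M) t <-> Pred s t).

Lemma S1i c s t : K <= minn s t -> (Pred (s + c * M) (t + c * M) <-> Pred s t).
Proof.
move=> H; elim: c => [|c IH]; first by rewrite !mul0n !addn0.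
have -> : s + c.+1 * M = (s + c * M) + M by rewrite mulSn; lia.
have -> : t + c.+1 * M = (t + c * M) + M by rewrite mulSn; lia.
rewrite S1 //; lia.
Qed.
Lemma S2i c s t : s + K <= t -> (Pred s (t + c * M) <-> Pred s t).
Proof.
move=> H; elim: c => [|c IH]; first by rewrite !mul0n !addn0.
have -> : t + c.+1 * M = (t + c * M) + M by rewrite mulSn; lia.
rewrite S2 //; lia.
Qed.
Lemma S3i c s t : t + K <= s -> (Pred (s + c * M) t <-> Pred s t).
Proof.
move=> H; elim: c => [|c IH]; first by rewrite !mul0n !addn0.
have -> : s + c.+1 * M = (s + c * M) + M by rewrite mulSn; lia.
rewrite S3 //; lia.
Qed.

Definition KM := K + M.
Definition cl x := if x < K then x else K + (x - K) %% M.
Lemma cl_lt x : cl x < KM.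
Proof. rewrite /cl /KM; case: (ltnP x K) => H; first lia. have := ltn_pmod (x - K) HM; lia. Qed.
Lemma cl0 : cl 0 = 0.
Proof. by rewrite /cl; case: ltnP => // H; rewrite mod0n; lia. Qed.
Lemma cl_ge x : K <= x -> K <= cl x.
Proof. by rewrite /cl; case: ltnP => H; lia. Qed.
Lemma cl_small x : x < K -> cl x = x.
Proof. by rewrite /cl => ->. Qed.
Lemma cl_dec x : K <= x -> x = cl x + (x - K) %/ M * M.
Proof. move=> H; rewrite /cl ltnNge H /=; have := divn_eq (x - K) M; lia. Qed.
Lemma cl_S x : cl x.+1 = if (cl x).+1 < KM then (cl x).+1 else K.
Proof.
rewrite /cl /KM; case: (ltnP x K) => H2.
  case: (ltnP x.+1 K) => H1.
    by rewrite ifT //; lia.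
  have -> : x.+1 - K = 0 by lia.
  by rewrite mod0n ifT //; lia.
rewrite ifF; last by apply/negbTE; rewrite -leqNgt; lia.
have -> : x.+1 - K = (x - K) + 1 by lia.
rewrite -modnDml.
have Hm := ltn_pmod (x - K) HM.
case: ifP => H3.
  rewrite modn_small; lia.
have -> : (x - K) %% M + 1 = M by move/negbT: H3; rewrite -leqNgt; lia.
by rewrite modnn addn0.
Qed.

Lemma Pred_cl s t :
  Pred s t <-> Pred (cl (minn s t) + cl (s - t)) (cl (minn s t) + cl (t - s)).
Proof.
case: (leqP s t) => Hst.
-
  have -> : s - t = 0 by lia.
  rewrite cl0 addn0.
  have E1 : Pred s t <-> Pred s (s + cl (t - s)).
    case: (ltnP (t - s) K) => Hd.
      by rewrite cl_small //; have -> : s + (t - s) = t by lia.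
    have Ht : t = (s + cl (t - s)) + (t - s - K) %/ M * M.
      by have := cl_dec Hd; lia.
    rewrite {1}Ht S2i //; have := cl_ge Hd; lia.
  rewrite E1.
  case: (ltnP s K) => Hs; first by rewrite (cl_small Hs).
  have Hs' := cl_dec Hs.
  have -> : s + cl (t - s) = (cl s + cl (t - s)) + (s - K) %/ M * M by lia.
  rewrite {1}Hs' S1i //; have := cl_ge Hs; lia.
-
  have -> : t - s = 0 by lia.
  rewrite cl0 addn0.
  have E1 : Pred s t <-> Pred (t + cl (s - t)) t.
    case: (ltnP (s - t) K) => Hd.
      by rewrite cl_small //; have -> : t + (s - t) = s by lia.
    have Ht : s = (t + cl (s - t)) + (s - t - K) %/ M * M.
      by have := cl_dec Hd; lia.
    rewrite {1}Ht S3i //; have := cl_ge Hd; lia.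
  rewrite E1.
  case: (ltnP t K) => Hs; first by rewrite (cl_small Hs).
  have Hs' := cl_dec Hs.
  have -> : t + cl (s - t) = (cl t + cl (s - t)) + (t - K) %/ M * M by lia.
  transitivity (Pred ((cl t + cl (s - t)) + (t - K) %/ M * M) (cl t + (t - K) %/ M * M));
    first by rewrite -Hs'.
  rewrite S1i //; have := cl_ge Hs; lia.
Qed.

Definition clO x : 'I_KM := Ordinal (cl_lt x).
Definition incn x := if x.+1 < KM then x.+1 else K.
Lemma inc_lt (c : 'I_KM) : incn c < KM.
Proof. rewrite /incn /KM; case: ifP => //; lia. Qed.
Definition inc (c : 'I_KM) : 'I_KM := Ordinal (inc_lt c).
Lemma inc_cl x : inc (clO x) = clO x.+1.
Proof. by apply: val_inj; rewrite /= cl_S. Qed.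

Definition p0 : 'I_4 := @Ordinal 4 0 isT.
Definition p1 : 'I_4 := @Ordinal 4 1 isT.
Definition p2 : 'I_4 := @Ordinal 4 2 isT.
Definition p3 : 'I_4 := @Ordinal 4 3 isT.
Definition ST := ('I_4 * 'I_KM * 'I_KM)%type.

Definition delta (st : ST) (a : PA) : ST :=
  let: (ph, c1, c2) := st in
  if nat_of_ord ph == 0 then
    match a with
    | (Some _, Some _) => (ph, inc c1, c2)
    | (Some _, None) => (p1, c1, inc c2)
    | (None, Some _) => (p2, c1, inc c2)
    | _ => (p3, c1, c2) end
  else if nat_of_ord ph == 1 then
    match a with (Some _, None) => (ph, c1, inc c2) | _ => (p3, c1, c2) end
  else if nat_of_ord ph == 2 then
    match a with (None, Some _) => (ph, c1, inc c2) | _ => (p3, c1, c2) end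
  else (p3, c1, c2).

Definition F (a b c : nat) : bool :=
  if excluded_middle_informative (Pred (a + b) (a + c)) then true else false.

Definition fin (st : ST) : bool :=
  let: (ph, c1, c2) := st in
  if nat_of_ord ph == 0 then F c1 0 0 else if nat_of_ord ph == 1 then F c1 c2 0
  else if nat_of_ord ph == 2 then F c1 0 c2 else false.

Definition c0 := clO 0.
Definition D : dfa PA := Dfa ((p0, c0, c0) : ST) delta fin.

Lemma iter_SS a : iter a (fun q => delta q SS) (p0, c0, c0) = (p0, clO a, c0).
Proof. elim: a => [|a IH] //=; rewrite IH /= inc_cl //. Qed.

Lemma iter_SN b c : iter b (fun q => delta q SN) (p0, c, c0) =
  if b == 0 then (p0, c, c0) else (p1, c, clO b).
Proof.
elim: b => [|b IH] //=; rewrite IH; case: b IH => [|b] _ /=; by rewrite inc_cl.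
Qed.

Lemma iter_NS b c : iter b (fun q => delta q NS) (p0, c, c0) =
  if b == 0 then (p0, c, c0) else (p2, c, clO b).
Proof.
elim: b => [|b IH] //=; rewrite IH; case: b IH => [|b] _ /=; by rewrite inc_cl.
Qed.

Lemma D_conv s t : dfa_accepts D (conv (us s) (us t)) =
  F (cl (minn s t)) (cl (s - t)) (cl (t - s)).
Proof.
rewrite /dfa_accepts conv_us !foldl_cat !foldl_nseq /= iter_SS iter_SN.
case: (ltngtP s t) => H.
- have -> : s - t = 0 by lia.
  rewrite /= iter_NS; case: eqP => Hd; first lia.
  by rewrite /= cl0.
- have -> : t - s = 0 by lia.
  case: eqP => Hd; first lia.
  by rewrite /= cl0.
- subst; rewrite subnn /= cl0 //.
Qed.

Lemma F_spec s t : F (cl (minn s t)) (cl (s - t)) (cl (t - s)) <-> Pred s t.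
Proof.
rewrite /F; case: excluded_middle_informative => H /=; split => // H'.
  exact: (proj2 (Pred_cl s t) H).
by case: H; exact: (proj1 (Pred_cl s t) H').
Qed.

Definition inv (w : seq PA) (st : ST) : Prop :=
  (nat_of_ord st.1.1 = 0 -> exists a, w = conv (us a) (us a)) /\
  (nat_of_ord st.1.1 = 1 -> exists a b, w = conv (us (a + b.+1)) (us a)) /\
  (nat_of_ord st.1.1 = 2 -> exists a b, w = conv (us a) (us (a + b.+1))).

Lemma inv_all w : inv w (foldl delta (p0, c0, c0) w).
Proof.
elim/last_ind: w => [|w x IH].
  by split; [move=> _; exists 0 | split] => //.
rewrite foldl_rcons.
case: (foldl delta _ w) IH => [[ph c1] c2] [I0 [I1 I2]] /=.
case: (ltnP ph 3) => Hph; last first.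
  have -> : (nat_of_ord ph == 0) = false by apply/negbTE/eqP; lia.
  have -> : (nat_of_ord ph == 1) = false by apply/negbTE/eqP; lia.
  have -> : (nat_of_ord ph == 2) = false by apply/negbTE/eqP; lia.
  by rewrite /inv; split; [|split].
case: (ltngtP ph 1) => H1; last first.
-
  rewrite H1 /=; case: (I1 H1) => a [b ->].
  case: x => [[[]|] [[]|]]; rewrite /inv /= ?H0 ?H1 ?H2; try by split; [|split].
  split; [done|split; [move=> _|done]].
  exists a, b.+1; rewrite rc_SN; [congr conv; congr us; lia | lia].
- case: (ltngtP ph 2) => H2; [lia|lia|].
  rewrite H2 /=; case: (I2 H2) => a [b ->].
  case: x => [[[]|] [[]|]]; rewrite /inv /= ?H0 ?H1 ?H2; try by split; [|split].
  split; [done|split; [done|move=> _]].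
  exists a, b.+1; rewrite rc_NS; [congr conv; congr us; lia | lia].
- have H0 : nat_of_ord ph = 0 by lia.
  rewrite H0 /=; case: (I0 H0) => a ->.
  case: x => [[[]|] [[]|]]; rewrite /inv /= ?H0 ?H1 ?H2; try by split; [|split].
  + split; [move=> _; exists a.+1; exact: rc_SS|done].
  + split; [done|split; [move=> _|done]].
    exists a, 0; rewrite rc_SN // addn1 //.
  + split; [done|split; [done|move=> _]].
    exists a, 0; rewrite rc_NS // addn1 //.
Qed.

Lemma regular_pred : regular (fun w => exists s t, w = conv (us s) (us t) /\ Pred s t).
Proof.
exists D => w; split.
- move=> Hacc.
  have [s [t Hw]] : exists s t, w = conv (us s) (us t).
    move: Hacc (inv_all w); rewrite /dfa_accepts /=.
    case: (foldl delta _ w) => [[ph c1] c2] /= Hf [I0 [I1 I2]].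
    case: (ltnP ph 3) => Hph; last first.
      move: Hf; rewrite /fin.
      have -> : (nat_of_ord ph == 0) = false by apply/negbTE/eqP; lia.
      have -> : (nat_of_ord ph == 1) = false by apply/negbTE/eqP; lia.
      by have -> : (nat_of_ord ph == 2) = false by apply/negbTE/eqP; lia.
    case: (ltngtP ph 1) => H1.
    + have H0 : nat_of_ord ph = 0 by lia.
      by case: (I0 H0) => a ->; exists a, a.
    + case: (ltngtP ph 2) => H2; [lia|lia|].
      by case: (I2 H2) => a [b ->]; exists a, (a + b.+1).
    + by case: (I1 H1) => a [b ->]; exists (a + b.+1), a.
  exists s, t; split => //; apply/F_spec; rewrite -D_conv -Hw; exact: Hacc.
- case=> s [t [-> HP]]; rewrite D_conv; exact/F_spec.
Qed.
End Gen.

End PartC.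
Import PartC.

Module PartD.

Section Backward.
Variables (Q : finType) (rho : rel Q) (n : nat) (p : 'I_n -> 'I_5 -> Q).
Notation H := (hatQ p).

Definition ns : {pred Q} := fun q => [forall k, forall i, p k i != q].
Definition r := #|ns|.

Lemma ns_nonseed q : q \in ns -> nonseed p q.
Proof. move=> /forallP Hq k i E; move: (Hq k) => /forallP /(_ i); by rewrite E eqxx. Qed.
Lemma nonseed_ns q : nonseed p q -> q \in ns.
Proof. move=> Hq; apply/forallP => k; apply/forallP => i; apply/eqP; exact: Hq. Qed.

Definition inl_of (o : 'I_r) : H := inl (exist _ (enum_val o) (ns_nonseed (enum_valP o))).

Definition dec (s : nat) : option H :=
  match insub s : option 'I_r with
  | Some o => Some (inl_of o)
  | None => omap (fun k : 'I_n => inr (k, (s - r) %/ n)) (insub ((s - r) %% n))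
  end.

Lemma dec_lo s (Hs : s < r) : dec s = Some (inl_of (Ordinal Hs)).
Proof. by rewrite /dec insubT. Qed.

Lemma dec_hi s : r <= s ->
  dec s = omap (fun k : 'I_n => inr (k, (s - r) %/ n)) (insub ((s - r) %% n)).
Proof. by move=> Hs; rewrite /dec insubF // ltnNge Hs. Qed.

Lemma dec_hiP s : r <= s -> 0 < n ->
  exists k : 'I_n, val k = (s - r) %% n /\ dec s = Some (inr (k, (s - r) %/ n)).
Proof.
move=> Hs Hn; rewrite dec_hi //.
have Hk : (s - r) %% n < n by rewrite ltn_mod.
by exists (Ordinal Hk); rewrite insubT.
Qed.

Lemma dec_hi0 s : r <= s -> n = 0 -> dec s = None.
Proof. by move=> Hs Hn; rewrite dec_hi // insubF //; apply/negbTE; rewrite Hn ltn0. Qed.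

Lemma dec_some s : isSome (dec s) = (s < r) || (0 < n).
Proof.
case: (ltnP s r) => Hs; first by rewrite (dec_lo Hs).
case: (posnP n) => Hn; first by rewrite dec_hi0 // Hn.
by case: (dec_hiP Hs Hn) => k [_ ->].
Qed.

Lemma dec_lo_inl s a : dec s = Some a -> s < r -> exists q, a = inl q.
Proof. move=> E Hs; move: E; rewrite (dec_lo Hs) => -[<-]; by eexists. Qed.

Lemma dec_inr s a : dec s = Some a -> r <= s ->
  exists k : 'I_n, val k = (s - r) %% n /\ a = inr (k, (s - r) %/ n).
Proof.
move=> E Hs; case: (posnP n) => Hn; first by move: E; rewrite dec_hi0.
case: (dec_hiP Hs Hn) => k [Hk E']; rewrite E' in E; case: E => <-.
by exists k.
Qed.

Lemma dec_inj s t a : dec s = Some a -> dec t = Some a -> s = t.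
Proof.
move=> Es Et.
case: (ltnP s r) => Hs; case: (ltnP t r) => Ht.
- move: Es Et; rewrite (dec_lo Hs) (dec_lo Ht) => -[<-] [] E.
  by have := enum_val_inj E => -[].
- case: (dec_inr Et Ht) => k [_ Ea]; move: Es; rewrite (dec_lo Hs) Ea; by [].
- case: (dec_inr Es Hs) => k [_ Ea]; move: Et; rewrite (dec_lo Ht) Ea; by [].
- case: (dec_inr Es Hs) => k [Hk Ea]; case: (dec_inr Et Ht) => l [Hl Eb].
  rewrite Ea in Eb; case: Eb => Ekl Eq.
  have : s - r = t - r.
    by rewrite (divn_eq (s - r) n) (divn_eq (t - r) n) -Hk -Hl Ekl Eq.
  lia.
Qed.

Lemma dec_surj a : exists s, dec s = Some a.
Proof.
case: a => [[q hq]|[k m]].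
- have Hin := nonseed_ns hq.
  exists (enum_rank_in Hin q); rewrite (dec_lo (ltn_ord _)).
  congr Some; rewrite /inl_of; congr inl.
  have E : enum_val (Ordinal (ltn_ord (enum_rank_in Hin q))) = q.
    have -> : Ordinal (ltn_ord (enum_rank_in Hin q)) = enum_rank_in Hin q by apply: val_inj.
    exact: enum_rankK_in.
  move: (ns_nonseed _); rewrite E => h; f_equal; apply: proof_irrelevance.
- have Hn : 0 < n by have := ltn_ord k; lia.
  exists (r + (m * n + k)).
  have Hs : r <= r + (m * n + k) by lia.
  case: (dec_hiP Hs Hn) => k' [Hk' ->].
  have E1 : (r + (m * n + k) - r) = m * n + k by lia.
  rewrite E1 in Hk' *.
  rewrite divnMDl // divn_small ?addn0 //.
  rewrite modnMDl modn_small // in Hk'.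
  by congr (Some (inr (_, _))); apply: val_inj.
Qed.

Definition K := r + 2 * n + 2.
Definition M := maxn n 1.
Lemma M_gt0 : 0 < M. Proof. rewrite /M; lia. Qed.

Definition shift (a : H) : H :=
  match a with inl q => inl q | inr (k, m) => inr (k, m.+1) end.

Lemma dec_shift s : r <= s -> dec (s + M) = omap shift (dec s).
Proof.
move=> Hs; case: (posnP n) => Hn.
  by rewrite !dec_hi0 //; lia.
have HM : M = n by rewrite /M; lia.
rewrite HM; case: (dec_hiP Hs Hn) => k [Hk ->].
have Hs' : r <= s + n by lia.
case: (dec_hiP Hs' Hn) => k' [Hk' ->] /=.
have E : s + n - r = (s - r) + n by lia.
rewrite E modnDr in Hk'; rewrite E (divnDr _ (dvdnn n)) divnn Hn addn1.
by congr (Some (inr (_, _))); apply: val_inj; rewrite Hk' Hk.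
Qed.

Definition far (a b : H) : Prop :=
  match a, b with
  | inl _, inr (_, j) => 1 <= j
  | inr (_, i), inr (_, j) => i.+2 <= j
  | _, _ => False end.

Lemma dec_far s t a b : s + K <= t -> dec s = Some a -> dec t = Some b -> far a b.
Proof.
move=> Hst Ea Eb.
have Ht : r <= t by rewrite /K in Hst; lia.
case: (dec_inr Eb Ht) => l [_ ->].
have Hn : 0 < n by case: (posnP n) => Hn //; move: Eb; rewrite dec_hi0.
case: (ltnP s r) => Hs.
- case: (dec_lo_inl Ea Hs) => q -> /=.
  have : n %/ n <= (t - r) %/ n by apply: leq_div2r; rewrite /K in Hst; lia.
  by rewrite divnn Hn.
- case: (dec_inr Ea Hs) => k [_ ->] /=.
  have : ((s - r) + 2 * n) %/ n <= (t - r) %/ n by apply: leq_div2r; rewrite /K in Hst; lia.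
  by rewrite divnDMl // addn2.
Qed.

Lemma hat_far_inr k i l j : i.+2 <= j ->
  (hatrho rho p (inr (k, i)) (inr (l, j)) <-> rho (p k o0) (p l o2)).
Proof.
move=> Hij /=; split.
  case=> [[? _]|[[? _]|[[? _]|[[_ ?]|[? _]]]]] //; exfalso; lia.
by move=> ?; right; right; right; left.
Qed.
Lemma hat_far_inr' k i l j : i.+2 <= j ->
  (hatrho rho p (inr (l, j)) (inr (k, i)) <-> rho (p l o2) (p k o0)).
Proof.
move=> Hij /=; split.
  case=> [[? _]|[[? _]|[[? _]|[[? _]|[_ ?]]]]] //; exfalso; lia.
by move=> ?; right; right; right; right.
Qed.

Lemma hat_shift_far a b : far a b -> (hatrho rho p a (shift b) <-> hatrho rho p a b).
Proof.
case: a => [q|[k i]]; case: b => [q'|[l j]] // Hf.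
- by move: Hf => /=; case: j.
- move: Hf => /= Hf.
  apply: (iff_trans (hat_far_inr k l (i := i) (j := j.+1) _)); first lia.
  exact: iff_sym (hat_far_inr k l Hf).
Qed.

Lemma hat_shift_far' a b : far b a -> (hatrho rho p (shift a) b <-> hatrho rho p a b).
Proof.
case: a => [q|[k i]]; case: b => [q'|[l j]] // Hf.
- by move: Hf => /=; case: i.
- move: Hf => /= Hf.
  apply: (iff_trans (hat_far_inr' l k (i := j) (j := i.+1) _)); first lia.
  exact: iff_sym (hat_far_inr' l k Hf).
Qed.

Lemma hat_shift2 k i l j :
  hatrho rho p (inr (k, i.+1)) (inr (l, j.+1)) <-> hatrho rho p (inr (k, i)) (inr (l, j)).
Proof.
rewrite /=; split; case=> [[H1 H2]|[[H1 H2]|[[H1 H2]|[[H1 H2]|[H1 H2]]]]];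
 [left|right;left|right;right;left|right;right;right;left|right;right;right;right
 |left|right;left|right;right;left|right;right;right;left|right;right;right;right];
 split => //; lia.
Qed.

Definition PredR (R' : H -> H -> Prop) s t :=
  exists a b, dec s = Some a /\ dec t = Some b /\ R' a b.

Lemma PredR_E R' s t : PredR R' s t <->
  match dec s, dec t with Some a, Some b => R' a b | _, _ => False end.
Proof.
rewrite /PredR; case: (dec s) => [a|]; case: (dec t) => [b|]; split => //.
- by case=> a' [b' [[<-] [[<-] ?]]].
- by move=> ?; exists a, b.
- by case=> a' [b' [? [? _]]].
- by case=> a' [b' [? [? _]]].
- by case=> a' [b' [? [? _]]].
Qed.

Section Rel.
Variable R' : H -> H -> Prop.
Hypothesis A1 : forall k i l j, R' (inr (k, i.+1)) (inr (l, j.+1)) <-> R' (inr (k, i)) (inr (l, j)).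
Hypothesis A2 : forall a b, far a b -> (R' a (shift b) <-> R' a b).
Hypothesis A3 : forall a b, far b a -> (R' (shift a) b <-> R' a b).

Lemma PS1 s t : K <= minn s t -> (PredR R' (s + M) (t + M) <-> PredR R' s t).
Proof.
move=> Hm; have Hs : r <= s by rewrite /K in Hm; lia.
have Ht : r <= t by rewrite /K in Hm; lia.
rewrite !PredR_E !dec_shift //.
case Ea : (dec s) => [a|]; case Eb : (dec t) => [b|] //=.
case: (dec_inr Ea Hs) => k [_ ->]; case: (dec_inr Eb Ht) => l [_ ->].
exact: A1.
Qed.

Lemma PS2 s t : s + K <= t -> (PredR R' s (t + M) <-> PredR R' s t).
Proof.
move=> Hst; have Ht : r <= t by rewrite /K in Hst; lia.
rewrite !PredR_E dec_shift //.
case Ea : (dec s) => [a|]; case Eb : (dec t) => [b|] //=.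
exact/A2/(dec_far Hst Ea Eb).
Qed.

Lemma PS3 s t : t + K <= s -> (PredR R' (s + M) t <-> PredR R' s t).
Proof.
move=> Hst; have Hs : r <= s by rewrite /K in Hst; lia.
rewrite !PredR_E dec_shift //.
case Ea : (dec s) => [a|]; case Eb : (dec t) => [b|] //=.
exact/A3/(dec_far Hst Eb Ea).
Qed.

Lemma regular_PredR : regular (fun w => exists s t, w = conv (us s) (us t) /\ PredR R' s t).
Proof. exact: (regular_pred M_gt0 PS1 PS2 PS3). Qed.
End Rel.

Lemma far_neq a b : far a b -> a <> b /\ a <> shift b.
Proof.
case: a => [q|[k i]]; case: b => [q'|[l j]] //= Hf; split => // -[] *; lia.
Qed.

Lemma regular_eq : regular (fun w => exists s t, w = conv (us s) (us t) /\ PredR (fun a b => a = b) s t).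
Proof.
apply: regular_PredR.
- by move=> k i l j; split => -[-> ->].
- move=> a b Hf; case: (far_neq Hf) => H1 H2; split => // E; by case: H2.
- move=> a b Hf; case: (far_neq Hf) => H1 H2; split => E; [by case: H2 | by case: H1].
Qed.

Lemma regular_hat : regular (fun w => exists s t, w = conv (us s) (us t) /\ PredR (hatrho rho p) s t).
Proof.
apply: regular_PredR.
- exact: hat_shift2.
- exact: hat_shift_far.
- exact: hat_shift_far'.
Qed.

End Backward.

Section Final.
Variables (Q : finType) (rho : rel Q) (n : nat) (p : 'I_n -> 'I_5 -> Q).
Variables (X : Type) (le : X -> X -> Prop) (f : X -> hatQ p) (g : hatQ p -> X).
Hypothesis fK : cancel f g.
Hypothesis gK : cancel g f.
Hypothesis Hle : forall x y, le x y <-> hatrho rho p (f x) (f y).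

Definition Lw (w : uword) : Prop := isSome (dec p (size w)).

Definition phi (u : {w | Lw w}) : X :=
  match dec p (size (sval u)) as o return isSome o -> X with
  | Some a => fun _ => g a
  | None => fun Hf => False_rect _ (Bool.diff_false_true Hf)
  end (proj2_sig u).

Lemma phiE (u : {w | Lw w}) a : dec p (size (sval u)) = Some a -> phi u = g a.
Proof.
case: u => w hw /= E; rewrite /phi /=; move: hw.
by rewrite /Lw E.
Qed.

Lemma Lw_us s a : dec p s = Some a -> Lw (us s).
Proof. by rewrite /Lw size_us => ->. Qed.

Definition rr := r p.
Definition Lstep (c : 'I_rr.+1) (_ : unit) : 'I_rr.+1 := inord (minn c.+1 rr).
Definition DL : dfa unit := Dfa (ord0 : 'I_rr.+1) Lstep (fun c => (c < rr) || (0 < n)).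

Lemma DL_iter k : val (iter k (fun q => Lstep q tt) ord0) = minn k rr.
Proof.
elim: k => [|k IH] /=; first by rewrite min0n.
rewrite /Lstep inordK IH; lia.
Qed.

Lemma regular_Lw : regular Lw.
Proof.
exists DL => w; rewrite /dfa_accepts /= (uword_eq w) foldl_nseq /Lw size_us dec_some /rr.
rewrite DL_iter; have -> : (minn (size w) rr < r p) = (size w < r p) by rewrite /rr; lia.
done. Qed.

Lemma rel_equiv (R : X -> X -> Prop) (R' : hatQ p -> hatQ p -> Prop) :
  (forall a b, R (g a) (g b) <-> R' a b) ->
  forall w, (exists s t, w = conv (us s) (us t) /\ PredR R' s t) <-> rel_lang phi R w.
Proof.
move=> HR w; split.
- case=> s [t [-> [a [b [Ea [Eb Hab]]]]]].
  exists (exist _ (us s) (Lw_us Ea)), (exist _ (us t) (Lw_us Eb)); split => //.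
  rewrite (phiE (a := a)) /= ?size_us // (phiE (a := b)) /= ?size_us //.
  exact/HR.
- case=> u [v [-> HRuv]].
  have := proj2_sig u; have := proj2_sig v; rewrite /Lw.
  case Ea : (dec p (size (sval u))) => [a|] //; case Eb : (dec p (size (sval v))) => [b|] // _ _.
  exists (size (sval u)), (size (sval v)); split; first by rewrite -!uword_eq.
  exists a, b; split => //; split => //; apply/HR.
  by rewrite -(phiE Ea) -(phiE Eb).
Qed.

Lemma regular_ext (S : finType) (P1 P2 : seq S -> Prop) :
  (forall w, P1 w <-> P2 w) -> regular P1 -> regular P2.
Proof. move=> E [A HA]; exists A => w; rewrite HA; exact: E. Qed.

Lemma backward_main : unary_FA_presentable le.
Proof.
exists Lw, phi; split; [|split; [|split]].
- exact: regular_Lw.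
- move=> x; case: (dec_surj (f x)) => s Es.
  exists (exist _ (us s) (Lw_us Es)); rewrite (phiE (a := f x)) /= ?size_us //.
- apply: regular_ext (rel_equiv _) (regular_eq p).
  move=> a b; split => [E|->] //; by rewrite -(gK a) -(gK b) E.
- apply: regular_ext (rel_equiv _) (regular_hat rho p).
  by move=> a b; rewrite Hle !gK.
Qed.
End Final.

End PartD.
Import PartD.

Unset Implicit Arguments.

Theorem theorem5p8 (X : Type) (le : X -> X -> Prop) :
  quasi_order le ->
  (unary_FA_presentable le <->
   exists (Q : finType) (rho : rel Q) (n : nat) (p : 'I_n -> 'I_5 -> Q),
     quasi_order (fun x y => rho x y) /\
     FA_foundational rho p /\
     (forall k : 'I_n, seed_ok rho p k) /\
     qo_iso le (hatrho rho p)).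
Proof.
move=> Hqo; split.
- case=> L [phi [[AL HL] [Hsurj [[AE HE] [AR HR]]]]].
  exact: (forward Hqo HL Hsurj HE HR).
- case=> Q [rho [n [p [_ [_ [_ [f [[g fK gK] Hle]]]]]]]].
  exact: (backward_main fK gK Hle).
Qed.
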